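(* Let $\epsilon\in(0,1)$. Let $x\in\{0,1\}^m$ and $y\in\{0,1\}^k$ be random variables satisfying the $\epsilon$-martingale condition with respect to the ordering $x_1,\dots,x_m,y_1,\dots,y_k$. Then \[ \Pr[\mu_x(y)\ge0]\le 3\exp\bigl(-\epsilon^4(1-O(\epsilon))k/64\bigr). \]
   Context: Characteristic strings and forks. A characteristic string is $w=w_1\dots w_n\in\{0,1\}^n$; index $i$ is honest if $w_i=0$ and adversarial if $w_i=1$. A fork for $w$ is a rooted tree with edges directed away from the root $r$ and labeling $\ell:V\to\{0,\dots,n\}$ with (F1) $\ell(r)=0$; (F2) labels strictly increasing along directed paths; (F3) each honest index labels exactly one vertex; (F4) for honest $i<j$ the vertex labeled $i$ has strictly smaller depth than the vertex labeled $j$. Write $F\vdash w$. A vertex is honest if it is the root or labeled by an honest index. A tine is a directed path from the root; its length is its number of edges, $\ell(t)$ the label of its last vertex. A fork is closed if every leaf is honest; a closed fork has a unique longest tine $\hat t$. For closed $F\vdash w$ and tine $t$: $\mathrm{gap}(t)=\mathrm{length}(\hat t)-\mathrm{length}(t)$, $\mathrm{reserve}(t)=|\{i:w_i=1,\ i>\ell(t)\}|$, $\mathrm{reach}(t)=\mathrm{reserve}(t)-\mathrm{gap}(t)$. For $w=xy$, tines are disjoint over $y$ if they share no edge terminating at a vertex with label $>|x|$ (a tine may be paired with itself). $\mu_x(F)=\max\min\{\mathrm{reach}(t_1),\mathrm{reach}(t_2)\}$ over pairs disjoint over $y$, and $\mu_x(y)=\max\{\mu_x(F):F\vdash xy\text{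 closed}\}$. A sequence of $\{0,1\}$-valued random variables $Z_1,\dots,Z_N$ satisfies the $\epsilon$-martingale condition if for every $t$, $\Pr[Z_t=1\mid Z_1,\dots,Z_{t-1}]\le(1-\epsilon)/2$ for arbitrary conditioning values. *)

(* Defs.v *)
From HB Require Import structures.
From mathcomp Require Import all_boot all_order all_algebra.
From mathcomp Require Import boolp reals.
From mathcomp Require Import sequences exp.
Set Implicit Arguments. Unset Strict Implicit. Unset Printing Implicit Defensive.
Import Order.TTheory GRing.Theory Num.Theory.

(* ---------- Characteristic strings ----------
   A characteristic string w = w_1 ... w_n is a [seq bool] of size n;
   w_i = nth false w (i-1); true = 1 = adversarial, false = 0 = honest. *)
Definition honest_idx (w : seq bool) (i : nat) : bool :=
  (0 < i <= size w) && ~~ nth false w i.-1.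
Definition adv_idx (w : seq bool) (i : nat) : bool :=
  (0 < i <= size w) && nth false w i.-1.

(* ---------- Forks ----------
   A (finite rooted) tree is encoded with vertices 0..fsize, vertex 0 being
   the root r; every non-root vertex v has a parent fpar v < v (so the edge
   fpar v -> v is directed away from the root).  Every finite rooted tree has
   such an encoding (number the vertices in BFS order).  flab is the labeling. *)
Record fork := Fork { fsize : nat; fpar : nat -> nat; flab : nat -> nat }.

Definition up (F : fork) (v : nat) : nat := if v is 0 then 0 else fpar F v.

Fixpoint depth_aux (F : fork) (fuel v : nat) : nat :=
  if fuel is fuel'.+1 then (if v is 0 then 0 else (depth_aux F fuel' (up F v)).+1)
  else 0.
(* depth = number of edges from the root (fpar v < v, so v steps suffice) *)
Definition depth (F : fork) (v : nat) : nat := depth_aux F v v.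

Definition is_fork (F : fork) (w : seq bool) : Prop :=
  [/\ (forall v, 0 < v <= fsize F -> fpar F v < v) /\
        (forall v, v <= fsize F -> flab F v <= size w),
      flab F 0 = 0,
      (forall v, 0 < v <= fsize F -> flab F (fpar F v) < flab F v),
      (forall i, honest_idx w i ->
         #|[pred v : 'I_(fsize F).+1 | flab F v == i]| = 1) &
      (forall u v, u <= fsize F -> v <= fsize F ->
         honest_idx w (flab F u) -> honest_idx w (flab F v) ->
         flab F u < flab F v -> depth F u < depth F v)].

Definition honest_vertex (F : fork) (w : seq bool) (v : nat) : bool :=
  (v == 0) || honest_idx w (flab F v).

Definition is_leaf (F : fork) (v : nat) : bool :=
  [forall u : 'I_(fsize F).+1, (0 < val u) ==> (fpar F u != v)].

Definition closed_fork (F : fork) (w : seq bool) : Prop :=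
  forall v, v <= fsize F -> is_leaf F v -> honest_vertex F w v.

(* Tines are in bijection with vertices: the tine of v is the unique path
   from the root to v; its length is depth v and l(t) = flab v.
   [on_tine F v u] : u is a vertex of the tine ending at v. *)
Definition on_tine (F : fork) (v u : nat) : bool :=
  [exists i : 'I_v.+1, iter i (up F) v == u].

Definition height (F : fork) : nat := \max_(v < (fsize F).+1) depth F v.

Definition gap (F : fork) (v : nat) : nat := height F - depth F v.

Definition reserve (F : fork) (w : seq bool) (v : nat) : nat :=
  #|[pred i : 'I_(size w).+1 | (flab F v < i) && adv_idx w i]|.

Definition reach (F : fork) (w : seq bool) (v : nat) : int :=
  ((reserve F w v)%:Z - (gap F v)%:Z)%R.

(* tines ending at v1, v2 are disjoint over y (|x| = m): they share no edge
   terminating at a vertex with label > m (edge terminating at u <-> u <> root) *)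
Definition disjoint_over (F : fork) (m v1 v2 : nat) : bool :=
  ~~ [exists u : 'I_(fsize F).+1,
        [&& 0 < val u, m < flab F u, on_tine F v1 u & on_tine F v2 u]].

(* mu_x(F) for w = x y with |x| = m : max over pairs of tines disjoint over y
   of min(reach t1, reach t2).  The pair (root, root) is always disjoint,
   so it serves as the initial value of the fold. *)
Definition mu_fork (m : nat) (w : seq bool) (F : fork) : int :=
  foldr Num.max (reach F w 0)
    [seq Num.min (reach F w (val p.1)) (reach F w (val p.2)) |
       p <- [seq (a, b) | a <- enum 'I_(fsize F).+1, b <- enum 'I_(fsize F).+1]
     & disjoint_over F m (val p.1) (val p.2)].

(* The event  mu_x(y) >= 0, where mu_x(y) = max over closed forks F |- xy of
   mu_x(F):  mu_x(y) >= 0  iff some closed fork F |- xy has mu_x(F) >= 0. *)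
Definition mu_ge0 (x y : seq bool) : Prop :=
  exists F : fork, [/\ is_fork F (x ++ y), closed_fork F (x ++ y)
                     & (0 <= mu_fork (size x) (x ++ y) F)%R].

Section Prob.
Variables (R : realType) (n : nat).
Local Open Scope ring_scope.

Definition is_distr (P : {ffun n.-tuple bool -> R}) : Prop :=
  (forall w, 0 <= P w) /\ \sum_(w : n.-tuple bool) P w = 1.

Definition Pr (P : {ffun n.-tuple bool -> R}) (E : n.-tuple bool -> Prop) : R :=
  \sum_(w : n.-tuple bool | `[< E w >]) P w.

(* epsilon-martingale condition for Z_1..Z_n (Z_{t+1} = nth false w t):
   Pr[Z_{t+1} = 1 | Z_1..Z_t = b] <= (1 - eps)/2 for every b, written
   multiplicatively (vacuous when the conditioning event has probability 0). *)
Definition eps_martingale (eps : R) (P : {ffun n.-tuple bool -> R}) : Prop :=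
  forall t, (t < n)%N -> forall b : seq bool, size b = t ->
    Pr P (fun w => take t w = b /\ nth false w t = true)
      <= (1 - eps) / 2 * Pr P (fun w => take t w = b).
End Prob.

(* Main.v *)
Require Import Defs.
From HB Require Import structures.
From mathcomp Require Import all_boot all_order all_algebra.
From mathcomp Require Import boolp reals.
From mathcomp Require Import sequences exp.
From mathcomp Require Import zify ring lra.
Import Order.TTheory GRing.Theory Num.Theory.
Set Implicit Arguments. Unset Strict Implicit. Unset Printing Implicit Defensive.


Section Tree.
Variable F : fork.
Local Notation N := (fsize F).
Hypothesis hpar : forall v, 0 < v <= N -> fpar F v < v.
Hypothesis hlab : forall v, 0 < v <= N -> flab F (fpar F v) < flab F v.

Definition anc v i := iter i (up F) v.

Lemma up_le v : v <= N -> up F v <= v.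
Proof. case: v => //= v hv. have := hpar (v:=v.+1). rewrite hv /=. move=> h. exact: ltnW (h isT). Qed.

Lemma up_lt v : 0 < v -> v <= N -> up F v < v.
Proof. case: v => //= v _ hv. by apply: hpar; rewrite hv. Qed.

Lemma anc_le v i : v <= N -> anc v i <= v.
Proof.
move=> hv; elim: i => [|i IH] //.
rewrite /anc iterS -/(anc v i).
have hi : anc v i <= N := leq_trans IH hv. exact: leq_trans (up_le hi) IH.
Qed.

Lemma depth_aux_eq f1 f2 v : v <= N -> v <= f1 -> v <= f2 -> depth_aux F f1 v = depth_aux F f2 v.
Proof.
elim: f1 f2 v => [|f1 IH] [|f2] [|v] // hN h1 h2.
rewrite [LHS]/= [RHS]/=.
congr S. apply: IH.
- exact: leq_trans (up_le hN) hN.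
- have := up_lt (v:=v.+1) isT hN. move=> /= ?; lia.
- have := up_lt (v:=v.+1) isT hN. move=> /= ?; lia.
Qed.

Lemma depth0 : depth F 0 = 0. Proof. by []. Qed.

Lemma depth_up v : 0 < v -> v <= N -> depth F v = (depth F (up F v)).+1.
Proof.
case: v => // v _ hN. rewrite /depth /=. congr S. apply: depth_aux_eq => //.
- exact: leq_trans (up_le hN) hN.
- have := up_lt (v:=v.+1) isT hN. rewrite /up /=. lia.
Qed.

Lemma depth_eq0 v : depth F v = 0 -> v = 0.
Proof. by case: v. Qed.

Lemma depth_le v : v <= N -> depth F v <= v.
Proof.
elim: v {-2}v (leqnn v) => [|n IH] v hv hN.
  by move: hv; rewrite leqn0 => /eqP ->.
case: v hv hN => // v hv hN. rewrite depth_up //.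
have h := up_lt (v:=v.+1) isT hN.
have := IH (up F v.+1) ltac:(lia) ltac:(lia). rewrite /up /= in h *. lia.
Qed.

Lemma ancS v i : anc v i.+1 = up F (anc v i). Proof. by []. Qed.

Lemma depth_anc v i : v <= N -> i <= depth F v -> depth F (anc v i) = depth F v - i.
Proof.
move=> hN; elim: i => [|i IH] hi; first by rewrite subn0.
rewrite ancS. have := IH (ltnW hi) => e.
have hA : anc v i <= N by exact: leq_trans (anc_le i hN) hN.
have hpos : 0 < anc v i.
  case: (anc v i) e => //=. rewrite depth0. lia.
have := depth_up hpos hA. lia.
Qed.

Lemma anc_depth v : v <= N -> anc v (depth F v) = 0.
Proof. move=> hN. apply: depth_eq0. by rewrite depth_anc // subnn. Qed.

Lemma anc_beyond v i : v <= N -> depth F v <= i -> anc v i = 0.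
Proof.
move=> hN hi. rewrite -(subnK hi) /anc iterD -/(anc v (depth F v)) anc_depth //.
by elim: (i - depth F v) => //= j ->.
Qed.

Lemma lab_anc v i j : v <= N -> i < j <= depth F v -> flab F (anc v j) < flab F (anc v i).
Proof.
move=> hN /andP[hij hj].
elim: j hij hj => // j IH hij hj.
have hA : anc v j <= N by exact: leq_trans (anc_le j hN) hN.
have hpos : 0 < anc v j.
  have := depth_anc hN (ltnW hj). case: (anc v j) => //=. rewrite depth0. lia.
have step : flab F (anc v j.+1) < flab F (anc v j).
  rewrite ancS. move: hpos hA. case: (anc v j) => // a _ hA /=. apply: hlab. by rewrite hA.
case: (ltngtP i j) => hij'.
- exact: ltn_trans step (IH hij' (ltnW hj)).
- lia.
- by rewrite hij'.
Qed.

Lemma on_tineP v u : v <= N -> reflect (exists2 i, i <= depth F v & anc v i = u) (on_tine F v u).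
Proof.
move=> hN; apply: (iffP existsP).
- case=> i /eqP hi. case: (leqP i (depth F v)) => h.
    by exists i.
  exists (depth F v) => //. rewrite anc_depth // -hi -/(anc v i) anc_beyond //. exact: ltnW.
- case=> i hi <-. have hi' : i < v.+1 by have := depth_le hN; lia.
  by exists (Ordinal hi'); rewrite /=.
Qed.

Lemma tine_le v u : v <= N -> on_tine F v u -> u <= N.
Proof. move=> hN /(on_tineP _ hN) [i _ <-]. exact: leq_trans (anc_le i hN) hN. Qed.

Lemma tine_self v : v <= N -> on_tine F v v.
Proof. move=> hN; apply/(on_tineP _ hN). by exists 0. Qed.

Lemma tine_order v u1 u2 : v <= N -> on_tine F v u1 -> on_tine F v u2 ->
  (flab F u1 < flab F u2) = (depth F u1 < depth F u2).
Proof.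
move=> hN /(on_tineP _ hN) [i hi <-] /(on_tineP _ hN) [j hj <-].
rewrite !depth_anc //.
case: (ltngtP i j) => h.
- have := lab_anc hN (i:=i) (j:=j) ltac:(lia). move=> hl.
  apply/idP/idP; lia.
- have := lab_anc hN (i:=j) (j:=i) ltac:(lia). move=> hl.
  apply/idP/idP; lia.
- by subst; rewrite !ltnn.
Qed.

Lemma tine_lab_le v u : v <= N -> on_tine F v u -> flab F u <= flab F v.
Proof.
move=> hN /(on_tineP _ hN) [i hi <-]. case: i hi => // i hi.
apply: ltnW. have := lab_anc hN (i:=0) (j:=i.+1) ltac:(lia). by [].
Qed.

Lemma tine_depth_le v u : v <= N -> on_tine F v u -> depth F u <= depth F v.
Proof. move=> hN /(on_tineP _ hN) [i hi <-]. rewrite depth_anc //. lia. Qed.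

Lemma tine_up v u : v <= N -> on_tine F v u -> 0 < u ->
  on_tine F v (up F u) /\ depth F (up F u) = (depth F u).-1.
Proof.
move=> hN /(on_tineP _ hN) [i hi <-] hpos.
have hA : anc v i <= N by exact: leq_trans (anc_le i hN) hN.
split; last by rewrite (depth_up hpos hA).
apply/(on_tineP _ hN). case: (ltnP i (depth F v)) => h.
  by exists i.+1.
rewrite anc_beyond // in hpos.
Qed.

Lemma tine_root v : v <= N -> on_tine F v 0.
Proof. move=> hN; apply/(on_tineP _ hN). exists (depth F v) => //. exact: anc_depth. Qed.

Lemma tine_root_only v u : v <= N -> on_tine F 0 u -> u = 0.
Proof. move=> hN /existsP [i /eqP <-]. case: i => [[|]] //. Qed.

End Tree.

Definition pstep (act : bool) (s : nat * nat) (b : bool) : nat * nat :=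
  let: (g, r) := s in
  if b then (g.-1, r.+1)
  else if g == 0 then (if r == 0 then ((act : nat), 0) else (0, r.-1))
  else (g.+1, r.-1).

Fixpoint pst (m : nat) (s : seq bool) (t : nat) : nat * nat :=
  if t is t'.+1 then pstep (m <= t') (pst m s t') (nth false s t') else (0, 0).

Section Walk.
Variables (F : fork) (w : seq bool).
Hypothesis hF : is_fork F w.
Local Notation N := (fsize F).
Local Notation n := (size w).

Let hpar : forall v, 0 < v <= N -> fpar F v < v. Proof. by case: hF => [[]]. Qed.
Let hlabn : forall v, v <= N -> flab F v <= n. Proof. by case: hF => [[]]. Qed.
Let hroot : flab F 0 = 0. Proof. by case: hF. Qed.
Let hlab : forall v, 0 < v <= N -> flab F (fpar F v) < flab F v. Proof. by case: hF. Qed.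
Let hF3 : forall i, honest_idx w i -> #|[pred v : 'I_N.+1 | flab F v == i]| = 1. Proof. by case: hF. Qed.
Let hF4 : forall u v, u <= N -> v <= N -> honest_idx w (flab F u) -> honest_idx w (flab F v) ->
         flab F u < flab F v -> depth F u < depth F v. Proof. by case: hF. Qed.

Lemma up_lab u : 0 < u -> u <= N -> flab F (up F u) < flab F u.
Proof. case: u => // u _ h. apply: hlab. by rewrite h. Qed.

Lemma lab_pos v : 0 < v -> v <= N -> 0 < flab F v.
Proof. move=> h1 h2. have := hlab (v:=v). rewrite h1 h2 => /(_ isT). lia. Qed.

Lemma hon_vtx p : honest_idx w p -> {vp : 'I_N.+1 | forall u : 'I_N.+1, (flab F u == p) = (u == vp)}.
Proof.
move=> hp. case: (mem_card1 (hF3 hp)) => x hx. exists x => u. by have := hx u; rewrite !inE.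
Qed.

Definition Dd t := \max_(u < N.+1 | honest_idx w (flab F u) && (flab F u <= t)) depth F u.
Definition Tt v t := \max_(u < N.+1 | on_tine F v u && (flab F u <= t)) depth F u.
Definition Aa l t := \sum_(i < t.+1) ((l < i) && adv_idx w i : nat).
Definition uu v t : int := ((Tt v t + Aa (flab F v) t)%:Z - (Dd t)%:Z)%R.

Lemma hon_or_adv p : 0 < p <= n -> honest_idx w p || adv_idx w p.
Proof. rewrite /honest_idx /adv_idx => ->. by case: (nth false w p.-1). Qed.

Lemma hon_adv p : honest_idx w p -> adv_idx w p -> False.
Proof. rewrite /honest_idx /adv_idx => /andP[_ h] /andP[_ h']. by rewrite h' in h. Qed.

Lemma Dd0 : Dd 0 = 0.
Proof.
apply/eqP; rewrite -leqn0; apply/bigop.bigmax_leqP => u /andP[h1 h2].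
move: h1; rewrite /honest_idx. lia.
Qed.

Lemma Dd_adv t : adv_idx w t.+1 -> Dd t.+1 = Dd t.
Proof.
move=> ha; apply: eq_bigl => u. rewrite leq_eqVlt ltnS.
case: eqP => // ->. case: (boolP (honest_idx w t.+1)) => // hh. case: (hon_adv hh ha).
Qed.

Lemma Dd_hon t (vp : 'I_N.+1) : honest_idx w t.+1 -> flab F vp = t.+1 ->
  Dd t.+1 = depth F vp /\ Dd t < depth F vp.
Proof.
move=> hh hv.
have hvN : vp <= N by have := ltn_ord vp.
have hlt : forall u : 'I_N.+1, honest_idx w (flab F u) -> flab F u <= t -> depth F u < depth F vp.
  move=> u hu hut. apply: hF4 => //. by have := ltn_ord u. by rewrite hv. lia.
split.
  apply/eqP; rewrite eqn_leq; apply/andP; split.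
    apply/bigop.bigmax_leqP => u /andP[hu hut]. move: hut; rewrite leq_eqVlt ltnS => /orP[/eqP e|hut].
      have : (flab F u == flab F vp) by rewrite e hv.
      case: (hon_vtx hh) => x hx. move: (hx u) (hx vp). rewrite e hv eqxx => /esym/eqP -> /esym/eqP ->. by [].
    exact: ltnW (hlt u hu hut).
  apply: (bigop.bigmax_sup vp) => //. by rewrite hv hh leqnn.
have hpos : 0 < depth F vp.
  case: (nat_of_ord vp) (lab_pos) hv => [|v'] hlp hv'. by rewrite hroot in hv'. by [].
have : Dd t <= (depth F vp).-1.
  apply/bigop.bigmax_leqP => u /andP[hu hut]. have := hlt u hu hut. lia.
lia.
Qed.

Lemma Dd_le_height t : Dd t <= height F.
Proof. apply/bigop.bigmax_leqP => u _. exact: bigop.leq_bigmax. Qed.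

Lemma depth_le_height v : v <= N -> depth F v <= height F.
Proof. move=> hv. have := bigop.leq_bigmax (F := fun u : 'I_N.+1 => depth F u) (Ordinal (n:=N.+1) (m:=v) hv). by []. Qed.

Section Tine.
Variable v : nat.
Hypothesis hv : v <= N.

Lemma tine_lab_pos u : on_tine F v u -> 0 < u -> 0 < flab F u.
Proof. move=> ht hu. apply: lab_pos => //. exact: tine_le ht. Qed.

Lemma Tt0 : Tt v 0 = 0.
Proof.
apply/eqP; rewrite -leqn0; apply/bigop.bigmax_leqP => u /andP[h1 h2].
case: (posnP u) => [e|hu]. by rewrite e.
have := tine_lab_pos h1 hu. lia.
Qed.

Lemma Tt_step t (x : 'I_N.+1) : on_tine F v x -> flab F x = t.+1 ->
  Tt v t.+1 = depth F x /\ Tt v t = (depth F x).-1 /\ 0 < depth F x.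
Proof.
move=> hx hl.
have hxpos : 0 < x. case: (posnP x) => // e. by rewrite e hroot in hl.
have hdpos : 0 < depth F x. move: hxpos; case: (nat_of_ord x) => //.
have ord := tine_order hpar hlab hv.
split; [|split] => //.
  apply/eqP; rewrite eqn_leq; apply/andP; split.
    apply/bigop.bigmax_leqP => u /andP[hu hut].
    have := ord _ _ hx hu. have := ord _ _ hu hx. rewrite hl. lia.
  apply: (bigop.bigmax_sup x) => //. by rewrite hx hl leqnn.
apply/eqP; rewrite eqn_leq; apply/andP; split.
  apply/bigop.bigmax_leqP => u /andP[hu hut].
  have := ord _ _ hu hx. rewrite hl. lia.
have [hupt hupd] := tine_up hpar hv hx hxpos.
have hupN : up F x <= N := tine_le hpar hv hupt.
have hul : flab F (up F x) < flab F x.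
  apply: up_lab => //. by have := ltn_ord x.
apply: (bigop.bigmax_sup (Ordinal (n:=N.+1) (m:=up F x) hupN)) => /=.
  rewrite hupt /=. lia.
by rewrite hupd.
Qed.

Lemma Tt_same t : (forall x : 'I_N.+1, on_tine F v x -> flab F x != t.+1) -> Tt v t.+1 = Tt v t.
Proof.
move=> hno; apply: eq_bigl => u. case: (boolP (on_tine F v u)) => //= hu.
have := hno u hu. lia.
Qed.

Lemma Tt_end : Tt v n = depth F v.
Proof.
apply/eqP; rewrite eqn_leq; apply/andP; split.
  apply/bigop.bigmax_leqP => u /andP[hu _]. exact: (tine_depth_le hpar hv hu).
apply: (bigop.bigmax_sup (Ordinal (n:=N.+1) (m:=v) hv)) => //=.
by rewrite tine_self // hlabn.
Qed.

Lemma Aa_step l t : Aa l t.+1 = Aa l t + ((l < t.+1) && adv_idx w t.+1).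
Proof. by rewrite /Aa big_ord_recr. Qed.

Lemma Aa_zero l t : t <= l -> Aa l t = 0.
Proof.
move=> h; rewrite /Aa; apply: big1 => i _.
have := ltn_ord i => hi. have -> : (l < i) = false by lia. by [].
Qed.

Lemma uu0 : uu v 0 = 0%R.
Proof. by rewrite /uu Tt0 Dd0 Aa_zero. Qed.

Lemma uu_adv t : adv_idx w t.+1 -> (uu v t.+1 <= uu v t + 1)%R.
Proof.
move=> ha. rewrite /uu Dd_adv // Aa_step ha andbT.
case: (boolP [exists x : 'I_N.+1, on_tine F v x && (flab F x == t.+1)]).
  case/existsP => x /andP[hx /eqP hl].
  have [h1 [h2 h3]] := Tt_step hx hl.
  have : t.+1 <= flab F v by rewrite -hl; exact: (tine_lab_le hpar hlab hv hx).
  move=> hle. have -> : (flab F v < t.+1) = false by lia.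
  rewrite h1 h2 addn0. lia.
move=> hno. rewrite Tt_same.
  case: (flab F v < t.+1) => /=; lia.
move=> x hx. apply/negP => /eqP e. move/existsP: hno; apply. exists x. by rewrite hx e eqxx.
Qed.

Lemma uu_hon t (vp : 'I_N.+1) : honest_idx w t.+1 -> flab F vp = t.+1 ->
   (on_tine F v vp -> uu v t.+1 = 0%R /\ uu v t = ((depth F vp - Dd t)%:Z - 1)%R)
   /\ (~~ on_tine F v vp -> uu v t.+1 = (uu v t - (depth F vp - Dd t)%:Z)%R).
Proof.
move=> hh hl.
have [hD1 hD2] := Dd_hon hh hl.
have hA : Aa (flab F v) t.+1 = Aa (flab F v) t.
  rewrite Aa_step. case: (boolP (adv_idx w t.+1)) => ha; last by rewrite andbF addn0.
  case: (hon_adv hh ha).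
rewrite /uu hA hD1. split.
  move=> ht. have [h1 [h2 h3]] := Tt_step ht hl.
  have hle : t.+1 <= flab F v by rewrite -hl; exact: (tine_lab_le hpar hlab hv ht).
  rewrite h1 h2 !Aa_zero //; last by lia. split; lia.
move=> hnt. rewrite Tt_same; first lia.
move=> x hx. apply/negP => /eqP e.
case: (hon_vtx hh) => y hy. have := hy x; have := hy vp. rewrite hl e eqxx => /esym/eqP e1 /esym/eqP e2.
by move: hnt; rewrite e1 -e2 hx.
Qed.

Lemma reserveE : reserve F w v = Aa (flab F v) n.
Proof.
rewrite /reserve /Aa -sum1_card big_mkcond /=. apply: eq_bigr => i _.
by rewrite inE; case: (_ && _).
Qed.

Lemma uu_end : (0 <= reach F w v)%R -> (0 <= uu v n)%R.
Proof.
rewrite /reach /gap reserveE /uu Tt_end.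
have := Dd_le_height n. have := depth_le_height hv. lia.
Qed.

End Tine.

Lemma walk_inv m v1 v2 : v1 <= N -> v2 <= N -> disjoint_over F m v1 v2 ->
  forall t, t <= n ->
  let: (g, r) := pst m w t in
  [/\ (uu v1 t <= r%:Z)%R, (uu v2 t <= r%:Z)%R &
      (0 < g -> (uu v1 t + g%:Z <= 0)%R \/ (uu v2 t + g%:Z <= 0)%R)].
Proof.
move=> hv1 hv2 hdis. elim=> [|t IH] ht.
  by rewrite /= !uu0.
have := IH (ltnW ht).
change (pst m w t.+1) with (pstep (m <= t) (pst m w t) (nth false w t)).
case: (pst m w t) => g r [h1 h2 h3].
have hp : 0 < t.+1 <= n by rewrite ht.
rewrite /pstep.
case hb: (nth false w t).
- have ha : adv_idx w t.+1 by rewrite /adv_idx hp /= hb.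
  have a1 := uu_adv hv1 ha. have a2 := uu_adv hv2 ha.
  cbv iota beta. split; lia.
- have hh : honest_idx w t.+1 by rewrite /honest_idx hp /= hb.
  case: (hon_vtx hh) => vp hvp.
  have hl : flab F vp = t.+1 by apply/eqP; rewrite hvp.
  have [_ hD] := Dd_hon hh hl.
  have [c1 n1] := uu_hon hv1 hh hl. have [c2 n2] := uu_hon hv2 hh hl.
  have hboth : m <= t -> ~~ (on_tine F v1 vp && on_tine F v2 vp).
    move=> hm. apply/negP => /andP[o1 o2]. move/negP: hdis; apply. apply/existsP; exists vp.
    rewrite o1 o2 hl andbT ltnS hm andbT. case: (posnP vp) => // e. by rewrite e hroot in hl.
  have e1 : (on_tine F v1 vp /\ uu v1 t.+1 = 0%R /\ uu v1 t = ((depth F vp - Dd t)%:Z - 1)%R) \/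
            (~~ on_tine F v1 vp /\ uu v1 t.+1 = (uu v1 t - (depth F vp - Dd t)%:Z)%R).
    case: (boolP (on_tine F v1 vp)) => o; [left; have [] := c1 o | right; have := n1 o]; by auto.
  have e2 : (on_tine F v2 vp /\ uu v2 t.+1 = 0%R /\ uu v2 t = ((depth F vp - Dd t)%:Z - 1)%R) \/
            (~~ on_tine F v2 vp /\ uu v2 t.+1 = (uu v2 t - (depth F vp - Dd t)%:Z)%R).
    case: (boolP (on_tine F v2 vp)) => o; [left; have [] := c2 o | right; have := n2 o]; by auto.
  case: (posnP g) => [g0|gpos]; first subst g.
    case: (posnP r) => [r0|rpos]; first subst r.
      rewrite ?eqxx. cbv iota beta. split.
      + case: e1 => [[_ [-> _]]|[_ ->]]; lia.
      + case: e2 => [[_ [-> _]]|[_ ->]]; lia.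
      + case: (leqP m t) => hm /=; last by [].
        move=> _. have := hboth hm.
        case: e1 => [[o1 [_ _]]|[o1 ->]]; case: e2 => [[o2 [_ _]]|[o2 ->]]; rewrite ?o1 ?o2 //; try lia.
    cbv iota beta. split => //.
      + case: e1 => [[_ [-> _]]|[_ ->]]; lia.
      + case: e2 => [[_ [-> _]]|[_ ->]]; lia.
  cbv iota beta. split.
  + case: e1 => [[_ [-> _]]|[_ ->]]; lia.
  + case: e2 => [[_ [-> _]]|[_ ->]]; lia.
  + move=> _. case: (h3 gpos) => hu; [left|right].
      case: e1 => [[_ [_ e]]|[_ ->]]; lia.
    case: e2 => [[_ [_ e]]|[_ ->]]; lia.
Qed.

Lemma walk_end m v1 v2 : v1 <= N -> v2 <= N -> disjoint_over F m v1 v2 ->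
  (0 <= reach F w v1)%R -> (0 <= reach F w v2)%R -> (pst m w n).1 = 0.
Proof.
move=> hv1 hv2 hdis r1 r2.
have := walk_inv hv1 hv2 hdis (leqnn n).
have u1 := uu_end hv1 r1. have u2 := uu_end hv2 r2.
case: (pst m w n) => g r /= [_ _ h]. case: (posnP g) => // gp.
case: (h gp); lia.
Qed.

End Walk.

Local Open Scope ring_scope.

Definition qq {R : realFieldType} (e : R) := (1 - e) / 2.
Definition zz {R : realFieldType} (e : R) := 1 + e^+2 / 4.
Definition yy {R : realFieldType} (e : R) := 1 + e.
Definition LL {R : realFieldType} (e : R) := 1 - e^+3 / 8.

Lemma C1 (R : realFieldType) (e : R) : 0 < e -> e < 1 -> 1 <= LL e * yy e.
Proof.
move=> he0 he1.
have -> : LL e * yy e = 1 + e * (8 - e^+2 - e^+3) / 8 by rewrite /LL /yy; field.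
have h2 : e^+2 <= 1 by apply: exprn_ile1; exact: ltW.
have h3 : e^+3 <= 1 by apply: exprn_ile1; exact: ltW.
have h : 0 <= 8 - e^+2 - e^+3 by lra.
have := mulr_ge0 (ltW he0) h.
lra.
Qed.

Lemma C2 (R : realFieldType) (e : R) : 0 < e -> e < 1 -> 1 <= LL e * zz e.
Proof.
move=> he0 he1.
have -> : LL e * zz e = 1 + e^+2 * (8 - 4 * e - e^+3) / 32 by rewrite /LL /zz; field.
have h3 : e^+3 <= 1 by apply: exprn_ile1; exact: ltW.
have h : 0 <= 8 - 4 * e - e^+3 by lra.
have := mulr_ge0 (sqr_ge0 e) h.
lra.
Qed.

Lemma C4 (R : realFieldType) (e : R) : 0 < e -> e < 1 -> qq e * zz e ^+ 2 + (1 - qq e) <= LL e * zz e.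
Proof.
move=> he0 he1.
have -> : LL e * zz e = qq e * zz e ^+ 2 + (1 - qq e) + e^+3 * (4 - e) / 32 by rewrite /LL /zz /qq; field.
have h : 0 <= 4 - e by lra.
have := mulr_ge0 (exprn_ge0 3 (ltW he0)) h.
lra.
Qed.

Lemma C5 (R : realFieldType) (e : R) : 0 < e -> e < 1 -> qq e * zz e * yy e ^+ 2 + (1 - qq e) <= LL e * yy e.
Proof.
move=> he0 he1.
have -> : LL e * yy e = qq e * zz e * yy e ^+ 2 + (1 - qq e) + e^+2 * (3 + 2 * e + e^+3) / 8 by rewrite /LL /zz /qq /yy; field.
have h3 := exprn_ge0 3 (ltW he0).
have h : 0 <= 3 + 2 * e + e^+3 by lra.
have := mulr_ge0 (sqr_ge0 e) h.
lra.
Qed.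

Definition fpot {R : realFieldType} (e : R) (s : nat * nat) : R := zz e ^+ s.2 / yy e ^+ s.1.

Lemma keyW (R : realFieldType) (q L W a b : R) : 0 <= q -> 0 <= W -> 1 <= a ->
  1 + q * (a - 1) <= L * b -> W + q * Num.max 0 (a * W - W) <= L * (b * W).
Proof.
move=> hq hW ha hb.
rewrite max_r; last first.
  have -> : a * W - W = (a - 1) * W by ring.
  apply: mulr_ge0 => //; lra.
have -> : W + q * (a * W - W) = W * (1 + q * (a - 1)) by ring.
have -> : L * (b * W) = W * (L * b) by ring.
exact: ler_wpM2l.
Qed.

Lemma st_act (R : realFieldType) (e : R) (s : nat * nat) : 0 < e -> e < 1 ->
  fpot e (pstep true s false) + qq e * Num.max 0 (fpot e (pstep true s true) - fpot e (pstep true s false))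
   <= LL e * fpot e s.
Proof.
move=> he0 he1.
have hz : 1 <= zz e. rewrite /zz. have := sqr_ge0 e. lra.
have hy : 1 <= yy e by rewrite /yy; lra.
have hz0 : zz e != 0 by apply: lt0r_neq0; lra.
have hy0 : yy e != 0 by apply: lt0r_neq0; lra.
have hq : 0 <= qq e by rewrite /qq; lra.
have c4 := @C4 R e he0 he1. have c5 := @C5 R e he0 he1.
have hL : 0 <= LL e. rewrite /LL. have : e^+3 <= 1 by apply: exprn_ile1; exact: ltW. lra.
have hqz : qq e * zz e * yy e <= qq e * zz e * yy e ^+ 2.
  rewrite expr2 mulrA. have h1 : 0 <= qq e * zz e * yy e by apply: mulr_ge0 => //; [apply: mulr_ge0|]; lra.
  have := ler_wpM2l h1 hy. by rewrite mulr1.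
case: s => [[|g] [|r]]; rewrite /pstep /=.
-
  set W := 1 / yy e.
  have e1 : fpot e (1%N, 0%N) = W by rewrite /fpot /= expr0 expr1.
  have e2 : fpot e (0%N, 1%N) = (zz e * yy e) * W by rewrite /fpot /= /W expr0 expr1; field.
  have e3 : fpot e (0%N, 0%N) = yy e * W by rewrite /fpot /= /W !expr0; field.
  rewrite e1 e2 e3. apply: keyW => //.
  + rewrite /W. apply: divr_ge0; lra.
  + have : 1 <= zz e * yy e by have := ler_pM ler01 ler01 hz hy; rewrite mulr1 //= ; lra. by [].
  + lra.
-
  set W := zz e ^+ r.
  have e1 : fpot e (0%N, r) = W by rewrite /fpot /= expr0 divr1.
  have e2 : fpot e (0%N, r.+2) = (zz e * zz e) * W by rewrite /fpot /= /W expr0 divr1 !exprS mulrA.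
  have e3 : fpot e (0%N, r.+1) = zz e * W by rewrite /fpot /= /W expr0 divr1 exprS.
  rewrite e1 e2 e3. apply: keyW => //.
  + rewrite /W. apply: exprn_ge0; lra.
  + have := ler_pM ler01 ler01 hz hz. by rewrite mulr1.
  + rewrite -expr2. lra.
-
  set W := 1 / yy e ^+ g.+2.
  have hyg : yy e ^+ g != 0 by apply: expf_neq0.
  have e1 : fpot e (g.+2, 0%N) = W by rewrite /fpot /= expr0.
  have e2 : fpot e (g, 1%N) = (zz e * yy e * yy e) * W by rewrite /fpot /= /W expr1 !exprS; field; rewrite ?hy0 ?hyg.
  have e3 : fpot e (g.+1, 0%N) = yy e * W by rewrite /fpot /= /W expr0 !exprS; field; rewrite ?hy0 ?hyg.
  rewrite e1 e2 e3. apply: keyW => //.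
  + rewrite /W. apply: divr_ge0; [lra| apply: exprn_ge0; lra].
  + have h1 := ler_pM ler01 ler01 hz hy. rewrite mulr1 in h1.
    have := ler_pM ler01 ler01 h1 hy. by rewrite mulr1.
  + move: c5. rewrite expr2 mulrA. lra.
-
  set W := zz e ^+ r / yy e ^+ g.+2.
  have hyg : yy e ^+ g != 0 by apply: expf_neq0.
  have e1 : fpot e (g.+2, r) = W by [].
  have e2 : fpot e (g, r.+2) = (zz e * zz e * yy e * yy e) * W by rewrite /fpot /= /W !exprS; field; rewrite ?hy0 ?hyg.
  have e3 : fpot e (g.+1, r.+1) = (zz e * yy e) * W by rewrite /fpot /= /W !exprS; field; rewrite ?hy0 ?hyg.
  rewrite e1 e2 e3. apply: keyW => //.
  + rewrite /W. apply: divr_ge0; apply: exprn_ge0; lra.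
  + have h1 := ler_pM ler01 ler01 hz hz. rewrite mulr1 in h1.
    have h2 := ler_pM ler01 ler01 h1 hy. rewrite mulr1 in h2.
    have := ler_pM ler01 ler01 h2 hy. by rewrite mulr1.
  + have c5z := ler_wpM2r (ltW (lt_le_trans ltr01 hz)) c5.
    have : (1 - qq e) <= (1 - qq e) * zz e.
      have : 0 <= 1 - qq e by rewrite /qq; lra.
      move=> h. have := ler_wpM2l h hz. by rewrite mulr1.
    move: c5z. rewrite expr2. move=> c5z h.
    have -> : 1 + qq e * (zz e * zz e * yy e * yy e - 1) = (qq e * zz e * (yy e * yy e) + (1 - qq e)) * zz e + ((1 - qq e) - (1 - qq e) * zz e) by ring.
    have -> : LL e * (zz e * yy e) = LL e * yy e * zz e by ring.
    lra.
Qed.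

Lemma st_inact (R : realFieldType) (e : R) (r : nat) : 0 < e -> e < 1 ->
  fpot e (pstep false (0%N, r) false) + qq e * Num.max 0 (fpot e (pstep false (0%N, r) true) - fpot e (pstep false (0%N, r) false))
   <= LL e * fpot e (0%N, r) + (1 - LL e + qq e * (zz e - 1)).
Proof.
move=> he0 he1.
have hz : 1 <= zz e. rewrite /zz. have := sqr_ge0 e. lra.
have hq : 0 <= qq e by rewrite /qq; lra.
have c4 := @C4 R e he0 he1.
have hL1 : LL e <= 1. rewrite /LL. have := exprn_ge0 3 (ltW he0). lra.
have hc : 0 <= 1 - LL e + qq e * (zz e - 1).
  have : 0 <= qq e * (zz e - 1) by apply: mulr_ge0; lra. lra.
case: r => [|r]; rewrite /pstep /=.
- rewrite /fpot /= !expr0 expr1 !divr1 mulr1. rewrite max_r; last lra. lra.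
- set W := zz e ^+ r.
  have e1 : fpot e (0%N, r) = W by rewrite /fpot /= expr0 divr1.
  have e2 : fpot e (0%N, r.+2) = (zz e * zz e) * W by rewrite /fpot /= /W expr0 divr1 !exprS mulrA.
  have e3 : fpot e (0%N, r.+1) = zz e * W by rewrite /fpot /= /W expr0 divr1 exprS.
  rewrite e1 e2 e3.
  have := @keyW R (qq e) (LL e) W (zz e * zz e) (zz e) hq.
  have hW : 0 <= W by rewrite /W; apply: exprn_ge0; lra.
  move=> /(_ hW).
  have h1 : 1 <= zz e * zz e by have := ler_pM ler01 ler01 hz hz; rewrite mulr1.
  move=> /(_ h1). have h2 : 1 + qq e * (zz e * zz e - 1) <= LL e * zz e by rewrite -expr2; lra.
  move=> /(_ h2). lra.
Qed.

Lemma PrE (R : realType) n (P : {ffun n.-tuple bool -> R}) (E : n.-tuple bool -> Prop) :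
  Pr P E = \sum_(w : n.-tuple bool) P w * (`[< E w >] : bool)%:R.
Proof.
rewrite /Pr big_mkcond /=; apply: eq_bigr => w _.
by case: (`[< E w >]); rewrite ?mulr1 ?mulr0.
Qed.

Lemma onehot (R : realType) n t (w : n.-tuple bool) (phi : seq bool -> R) : (t <= n)%N ->
  \sum_(b : t.-tuple bool) ((take t w == b :> seq bool)%:R * phi b) = phi (take t w).
Proof.
move=> ht.
have hs : size (take t w) == t by rewrite size_takel // size_tuple.
rewrite (bigD1 (Tuple hs)) //= eqxx mul1r big1 ?addr0 // => b hb.
have -> : (take t w == b :> seq bool) = false.
  apply/negP => /eqP e. move/negP: hb; apply. apply/eqP. apply: val_inj => /=. by rewrite e.
by rewrite mul0r.
Qed.

Lemma wmart (R : realType) n (eps : R) (P : {ffun n.-tuple bool -> R}) t (phi : seq bool -> R) :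
  eps_martingale eps P -> (t < n)%N -> (forall s, 0 <= phi s) ->
  \sum_(w : n.-tuple bool) P w * ((nth false w t)%:R * phi (take t w))
    <= (1 - eps) / 2 * \sum_(w : n.-tuple bool) P w * phi (take t w).
Proof.
move=> hm ht hphi.
have E1 : \sum_(w : n.-tuple bool) P w * ((nth false w t)%:R * phi (take t w)) =
   \sum_(b : t.-tuple bool) phi b * Pr P (fun w => take t w = b /\ nth false w t = true).
  under eq_bigr => w _ do rewrite -(onehot w phi (ltnW ht)) !mulr_sumr.
  rewrite exchange_big /=. apply: eq_bigr => b _. rewrite PrE mulr_sumr. apply: eq_bigr => w _.
  have -> : `[< take t w = b /\ nth false w t = true >] = (take t w == b :> seq bool) && nth false w t.
    apply/idP/idP.
      by move/asboolP => [-> ->]; rewrite eqxx.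
    by move/andP => [/eqP h1 h2]; apply/asboolP.
  by case: (take t w == b :> seq bool); case: (nth false w t); rewrite /=; ring.
have E2 : \sum_(w : n.-tuple bool) P w * phi (take t w) =
   \sum_(b : t.-tuple bool) phi b * Pr P (fun w => take t w = b).
  under eq_bigr => w _ do rewrite -(onehot w phi (ltnW ht)) !mulr_sumr.
  rewrite exchange_big /=. apply: eq_bigr => b _. rewrite PrE mulr_sumr. apply: eq_bigr => w _.
  have -> : `[< take t w = b >] = (take t w == b :> seq bool).
    apply/idP/idP.
      by move/asboolP => ->; rewrite eqxx.
    by move/eqP => h1; apply/asboolP.
  by case: (take t w == b :> seq bool); rewrite /=; ring.
rewrite E1 E2 mulr_sumr. apply: ler_sum => b _.
rewrite mulrCA. apply: ler_wpM2l => //. apply: hm => //. exact: size_tuple.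
Qed.

Lemma final_ineq (R : realType) (e pr : R) (k : nat) : 0 < e -> e < 1 -> pr <= 1 ->
  pr <= LL e ^+ k * (2 / e) -> pr <= 3 * expR (- (e ^+ 4 * (1 - 0 * e) * k%:R / 64)).
Proof.
move=> he0 he1 hp1 hpk.
have -> : e ^+ 4 * (1 - 0 * e) * k%:R / 64 = e ^+ 4 * k%:R / 64 by ring.
set Y := e ^+ 4 * k%:R / 64.
have hk : 0 <= k%:R :> R by exact: ler0n.
case: (lerP Y (2/3)) => hY.
  have := expR_ge1Dx (- Y). lra.
set ie := 1 / e.
have hie : e * ie = 1 by rewrite /ie; field; apply: lt0r_neq0.
have hie1 : 1 <= ie by rewrite /ie ler_pdivlMr // mul1r; apply: ltW.
have h2e : 2 / e = 2 * ie by rewrite /ie; field; apply: lt0r_neq0.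
have h3e : e ^+ 3 = e ^+ 4 * ie by rewrite /ie exprS; field; apply: lt0r_neq0.
clearbody ie.
set D := Y * (8 * ie - 1).
have hD : e ^+ 3 / 8 * k%:R = Y + D by rewrite /D /Y h3e; field.
have hL : LL e ^+ k <= expR (- (e ^+ 3 / 8)) ^+ k.
  apply: lerXn2r.
  - rewrite nnegrE /LL. have : e ^+ 3 <= 1 by apply: exprn_ile1; apply: ltW. lra.
  - by rewrite nnegrE; apply: expR_ge0.
  - have := expR_ge1Dx (- (e ^+ 3 / 8)). rewrite /LL. lra.
rewrite -expRM_natr mulNr hD opprD expRD in hL.
have hD2 : 2 / 3 * (8 * ie - 1) <= D.
  rewrite /D. have h1 : 0 <= (Y - 2/3) * (8 * ie - 1) by apply: mulr_ge0; lra.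
  have -> : Y * (8 * ie - 1) = (Y - 2/3) * (8 * ie - 1) + 2 / 3 * (8 * ie - 1) by ring.
  lra.
have hexpD := expR_ge1Dx D.
have hkey : 2 * ie * expR (- D) <= 3.
  rewrite expRN. have hpos := expR_gt0 D.
  rewrite ler_pdivrMr //. lra.
have hE := expR_gt0 (- Y).
apply: (le_trans hpk). rewrite h2e.
have : LL e ^+ k * (2 * ie) <= expR (- Y) * expR (- D) * (2 * ie).
  apply: ler_wpM2r => //. lra.
move=> h. apply: (le_trans h).
have -> : expR (- Y) * expR (- D) * (2 * ie) = expR (- Y) * (2 * ie * expR (- D)) by ring.
rewrite [3 * _]mulrC. apply: ler_wpM2l; [exact: ltW | exact: hkey].
Qed.

Lemma pst_take m s t t' : (t <= t')%N -> pst m s t = pst m (take t' s) t.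
Proof.
elim: t => [|t IH] h //=. rewrite -IH ?(ltnW h) // nth_take //.
Qed.

Lemma pst_inact m s t : (t <= m)%N -> (pst m s t).1 = 0%N.
Proof.
elim: t => [|t IH] h //=. have := IH (ltnW h). case: (pst m s t) => g r /= ->.
have -> : (m <= t)%N = false by lia.
rewrite /pstep. by case: (nth false s t) => //=; case: r.
Qed.

Definition Ex (R : realType) n (P : {ffun n.-tuple bool -> R}) (e : R) m t :=
  \sum_(w : n.-tuple bool) P w * fpot e (pst m w t).

Lemma Estep (R : realType) n (P : {ffun n.-tuple bool -> R}) (e : R) m t (Lam c : R) :
  is_distr P -> eps_martingale e P -> (t < n)%N ->
  (forall w : n.-tuple bool,
     fpot e (pstep (m <= t)%N (pst m w t) false) + qq e * Num.max 0
       (fpot e (pstep (m <= t)%N (pst m w t) true) - fpot e (pstep (m <= t)%N (pst m w t) false))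
     <= Lam * fpot e (pst m w t) + c) ->
  Ex P e m t.+1 <= Lam * Ex P e m t + c.
Proof.
move=> [hP0 hP1] hm ht hb.
set act := (m <= t)%N.
pose phi := fun s : seq bool => Num.max 0 (fpot e (pstep act (pst m s t) true) - fpot e (pstep act (pst m s t) false)).
have hphi : forall s, 0 <= phi s by move=> s; rewrite /phi le_max lexx.
have hphiw : forall w : n.-tuple bool, phi (take t w) = Num.max 0 (fpot e (pstep act (pst m w t) true) - fpot e (pstep act (pst m w t) false)).
  by move=> w; rewrite /phi -(pst_take m w (leqnn t)).
have h1 : Ex P e m t.+1 <= \sum_(w : n.-tuple bool) P w * fpot e (pstep act (pst m w t) false)
             + \sum_(w : n.-tuple bool) P w * ((nth false w t)%:R * phi (take t w)).
  rewrite -big_split /=. apply: ler_sum => w _. rewrite -mulrDr. apply: ler_wpM2l => //.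
  rewrite hphiw.
  change (pst m w t.+1) with (pstep act (pst m w t) (nth false w t)).
  set a := fpot e (pstep act (pst m w t) true). set b := fpot e (pstep act (pst m w t) false).
  have hab : a - b <= Num.max 0 (a - b) by rewrite le_max lexx orbT.
  case: (nth false w t) => /=; rewrite -/a -/b.
    rewrite mul1r. lra.
  rewrite mul0r addr0. lra.
have h2 := wmart hm ht hphi.
apply: (le_trans h1). apply: le_trans (lerD (lexx _) h2) _.
rewrite mulr_sumr -big_split /=.
have -> : Lam * Ex P e m t + c = \sum_(w : n.-tuple bool) P w * (Lam * fpot e (pst m w t) + c).
  rewrite /Ex. under [RHS]eq_bigr => w _ do rewrite mulrDr.
  rewrite big_split /=. congr (_ + _).
    rewrite mulr_sumr. apply: eq_bigr => w _. ring.
  by rewrite -mulr_suml hP1 mul1r.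
apply: ler_sum => w _. rewrite hphiw.
have := hb w. rewrite -/act => hw.
have -> : P w * fpot e (pstep act (pst m w t) false) +
   (1 - e) / 2 * (P w * Num.max 0 (fpot e (pstep act (pst m w t) true) - fpot e (pstep act (pst m w t) false)))
   = P w * (fpot e (pstep act (pst m w t) false) + qq e * Num.max 0 (fpot e (pstep act (pst m w t) true) - fpot e (pstep act (pst m w t) false))).
  rewrite /qq. ring.
exact: ler_wpM2l.
Qed.

Lemma fpot_ge0 (R : realFieldType) (e : R) s : 0 < e -> 0 <= fpot e s.
Proof.
move=> he. rewrite /fpot. apply: divr_ge0; apply: exprn_ge0; rewrite /zz /yy.
  have := sqr_ge0 e. lra.
lra.
Qed.

Lemma C6 (R : realFieldType) (e : R) : 0 < e -> e < 1 ->
  LL e * (2 / e) + (1 - LL e + qq e * (zz e - 1)) <= 2 / e.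
Proof.
move=> he0 he1.
have -> : LL e * (2 / e) + (1 - LL e + qq e * (zz e - 1)) = 2 / e - e^+2 / 8.
  rewrite /LL /qq /zz. field. exact: lt0r_neq0.
have := sqr_ge0 e. lra.
Qed.

Lemma LL_ge0 (R : realFieldType) (e : R) : 0 < e -> e < 1 -> 0 <= LL e.
Proof. move=> he0 he1. rewrite /LL. have : e ^+ 3 <= 1 by apply: exprn_ile1; apply: ltW. lra. Qed.

Lemma Ex0 (R : realType) n (P : {ffun n.-tuple bool -> R}) (e : R) m :
  is_distr P -> Ex P e m 0 = 1.
Proof.
move=> [_ h1]. rewrite /Ex /= /fpot /= !expr0 divr1.
under eq_bigr => w _ do rewrite mulr1. exact: h1.
Qed.

Lemma phase1 (R : realType) n (P : {ffun n.-tuple bool -> R}) (e : R) m :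
  0 < e -> e < 1 -> is_distr P -> eps_martingale e P ->
  forall t, (t <= m)%N -> (t <= n)%N -> Ex P e m t <= 2 / e.
Proof.
move=> he0 he1 hd hm. elim=> [|t IH] htm htn.
  rewrite Ex0 //. rewrite ler_pdivlMr // mul1r. lra.
have := @Estep R n P e m t (LL e) (1 - LL e + qq e * (zz e - 1)) hd hm htn.
have -> : (m <= t)%N = false by lia.
move=> /(_ _) h.
have h' : Ex P e m t.+1 <= LL e * Ex P e m t + (1 - LL e + qq e * (zz e - 1)).
  apply: h => w. have := pst_inact w (ltnW htm). case: (pst m w t) => g r /= ->.
  exact: st_inact.
apply: (le_trans h'). apply: le_trans (C6 he0 he1).
apply: lerD => //. apply: ler_wpM2l; first exact: LL_ge0.
apply: IH; lia.
Qed.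

Lemma phase2 (R : realType) n (P : {ffun n.-tuple bool -> R}) (e : R) m :
  0 < e -> e < 1 -> is_distr P -> eps_martingale e P -> (m <= n)%N ->
  forall j, (m + j <= n)%N -> Ex P e m (m + j) <= LL e ^+ j * (2 / e).
Proof.
move=> he0 he1 hd hm hmn. elim=> [|j IH] hj.
  rewrite addn0 expr0 mul1r. exact: phase1.
rewrite addnS.
have := @Estep R n P e m (m + j) (LL e) 0 hd hm ltac:(lia).
have -> : (m <= m + j)%N = true by lia.
move=> /(_ _) h.
have h' : Ex P e m (m + j).+1 <= LL e * Ex P e m (m + j) + 0.
  apply: h => w. rewrite addr0. exact: st_act.
apply: (le_trans h'). rewrite addr0 exprS -mulrA. apply: ler_wpM2l; first exact: LL_ge0.
apply: IH; lia.
Qed.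

Lemma foldr_max_ge0 (x0 : int) s : (0 <= foldr Num.max x0 s)%R -> (0 <= x0)%R \/ exists2 y, y \in s & (0 <= y)%R.
Proof.
elim: s => [|a s IH] /=; first by left.
rewrite le_max => /orP[h|/IH [h|[y hy h]]].
- right; exists a => //. exact: mem_head.
- by left.
- right; exists y => //. by rewrite in_cons hy orbT.
Qed.

Lemma mu_pair F m w : (0 <= mu_fork m w F)%R -> exists v1 v2, [/\ (v1 <= fsize F)%N, (v2 <= fsize F)%N,
  disjoint_over F m v1 v2, (0 <= reach F w v1)%R & (0 <= reach F w v2)%R].
Proof.
rewrite /mu_fork => /foldr_max_ge0 [h|[y hy h]].
  exists 0%N, 0%N. split => //. apply/existsP => -[u /and4P[hu _ ht _]].
  move: ht => /existsP [i /eqP]. case: i => [[|i]] //= _ e. by move: hu => /=; rewrite -e.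
move/mapP: hy => [[a b]]. rewrite mem_filter => /andP [hd _] hy. rewrite hy le_min in h.
case/andP: h => h1 h2. exists a, b. split => //.
- by have := ltn_ord a.
- by have := ltn_ord b.
Qed.

Lemma comb_main m k (w : (m + k).-tuple bool) :
  mu_ge0 (take m w) (drop m w) -> (pst m w (m + k)).1 = 0%N.
Proof.
case=> F [hF _]. rewrite cat_take_drop in hF *. rewrite size_takel ?size_tuple ?leq_addr // => hmu.
have [v1 [v2 [hv1 hv2 hdis r1 r2]]] := mu_pair hmu.
have := walk_end hF hv1 hv2 hdis r1 r2. by rewrite size_tuple.
Qed.

Unset Implicit Arguments.
Theorem mainTheorem16 (R : realType) :
  exists C : R, forall eps : R, 0 < eps < 1 ->
  forall (m k : nat) (P : {ffun (m + k).-tuple bool -> R}),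
    is_distr P -> eps_martingale eps P ->
    Pr P (fun w => mu_ge0 (take m w) (drop m w))
      <= 3 * expR (- (eps ^+ 4 * (1 - C * eps) * k%:R / 64)).
Proof.
exists 0 => eps /andP[he0 he1] m k P hd hm.
have [hP0 hP1] := hd.
apply: final_ineq => //.
  rewrite PrE -[X in _ <= X]hP1. apply: ler_sum => x _.
  have := hP0 x. case: (`[< _ >]) => /= h; by rewrite ?mulr1 ?mulr0.
have hE : Pr P (fun w => mu_ge0 (take m w) (drop m w)) <= Ex P eps m (m + k).
  rewrite PrE /Ex. apply: ler_sum => x _. apply: ler_wpM2l; first exact: hP0.
  case: (boolP `[< _ >]) => /= h.
    have := comb_main (asboolW h). rewrite /fpot. case: (pst m x (m + k)) => g r /= ->.
    rewrite expr0 divr1. apply: exprn_ege1. rewrite /zz. have := sqr_ge0 eps. lra.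
  exact: fpot_ge0.
apply: (le_trans hE). apply: phase2 => //; lia.
Qed.
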